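(* Let $\mathbf{X}\in\mathbb{R}^{n\times p}$ with $n>p$ have full column rank, let $\mathbf{D}\in\mathbb{R}^{m\times p}$ ($m<p$) have full row rank, let $\mathbf{E}\in\mathbb{R}^{(p-m)\times p}$ be such that $\tilde{\mathbf{D}}=[\mathbf{D}^\top,\mathbf{E}^\top]^\top$ is invertible, and write $\tilde{\mathbf{D}}^{-1}=[\mathbf{Z},\mathbf{F}]$ with $\mathbf{Z}\in\mathbb{R}^{p\times m}$, $\mathbf{F}\in\mathbb{R}^{p\times(p-m)}$. Let $\mathbf{M}=\mathbf{I}_n-\mathbf{X}\mathbf{F}[(\mathbf{X}\mathbf{F})^\top\mathbf{X}\mathbf{F}]^{-1}(\mathbf{X}\mathbf{F})^\top$ and $\mathbf{X}^*=\mathbf{M}\mathbf{X}\mathbf{Z}$. Then $\mathbf{X}^*$ has full column rank $m$, and hence $\boldsymbol\Sigma^*=\mathbf{X}^{*\top}\mathbf{X}^*$ is invertible. *)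

(* Defs.v *)
From HB Require Import structures.
From mathcomp Require Import all_boot all_order all_algebra.
Set Implicit Arguments. Unset Strict Implicit. Unset Printing Implicit Defensive.
Import Order.TTheory GRing.Theory Num.Theory.
Local Open Scope ring_scope.

Definition resid_proj (R : fieldType) (n k : nat) (A : 'M[R]_(n, k)) : 'M[R]_n :=
  1%:M - A *m invmx (A^T *m A) *m A^T.

(* Main.v *)
Require Import Defs.
From HB Require Import structures.
From mathcomp Require Import all_boot all_order all_algebra.
Import Order.TTheory GRing.Theory Num.Theory.
Local Open Scope ring_scope.

Lemma colinj (R : fieldType) n k (B : 'M[R]_(n, k)) :
  (forall v : 'cV_k, B *m v = 0 -> v = 0) -> \rank B = k.
Proof.
move=> H; rewrite -mxrank_tr; apply/eqP; apply: inj_row_free => v h.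
have : B *m v^T = 0 by rewrite -(trmxK (B *m v^T)) trmx_mul trmxK h trmx0.
by move/H => /(congr1 trmx); rewrite trmxK trmx0.
Qed.

Lemma colfree (R : fieldType) n k (B : 'M[R]_(n, k)) (v : 'cV_k) :
  \rank B = k -> B *m v = 0 -> v = 0.
Proof.
move=> rB h.
have fB : row_free B^T by rewrite /row_free mxrank_tr rB.
have : v^T *m B^T == 0 by rewrite -trmx_mul h trmx0.
by rewrite mulmx_free_eq0 // => /eqP /(congr1 trmx); rewrite trmxK trmx0.
Qed.

Arguments colfree {R n k B v}.

Lemma unit_colinj (R : comUnitRingType) k (B : 'M[R]_k) (v : 'cV_k) :
  B \in unitmx -> B *m v = 0 -> v = 0.
Proof. by move=> uB h; rewrite -(mulKmx uB v) h mulmx0. Qed.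

Arguments unit_colinj {R k B v}.

Lemma normsq0 (R : realFieldType) n (v : 'cV[R]_n) : v^T *m v = 0 -> v = 0.
Proof.
move=> h; have := congr1 (fun M : 'M[R]_1 => M 0 0) h; rewrite !mxE => /eqP.
rewrite psumr_eq0 => [/allP H|i _]; last by rewrite !mxE -expr2 sqr_ge0.
apply/matrixP => i j; rewrite (ord1 j) !mxE.
have := H i (mem_index_enum i); rewrite !mxE -expr2 => /implyP.
by rewrite sqrf_eq0 => /(_ isT) /eqP.
Qed.

Lemma gram_unit (R : realFieldType) n k (B : 'M[R]_(n, k)) :
  \rank B = k -> B^T *m B \in unitmx.
Proof.
move=> rB; rewrite -row_free_unit /row_free; apply/eqP/colinj => v h.
apply: (colfree rB); apply: normsq0.
by rewrite trmx_mul -mulmxA (mulmxA B^T) h mulmx0.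
Qed.

(* p = m + q, with q = p - m >= 1 (i.e. m < p). *)
Theorem mainTheorem12 (R : realFieldType) (n m q : nat)
  (X : 'M[R]_(n, m + q)) (D : 'M[R]_(m, m + q)) (E : 'M[R]_(q, m + q))
  (Z : 'M[R]_(m + q, m)) (F : 'M[R]_(m + q, q)) :
  (m + q < n)%N -> (0 < q)%N ->
  \rank X = (m + q)%N ->
  \rank D = m ->
  col_mx D E \in unitmx ->
  invmx (col_mx D E) = row_mx Z F ->
  let Xs := resid_proj (X *m F) *m X *m Z in
  \rank Xs = m /\ Xs^T *m Xs \in unitmx.
Proof.
move=> _ _ rX _ uDE hinv Xs.
have uZF : row_mx Z F \in unitmx by rewrite -hinv unitmx_inv.
have rA : \rank (X *m F) = q.
  apply: colinj => u h.
  have h1 : F *m u = 0 by apply: (colfree rX); rewrite mulmxA.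
  have : row_mx Z F *m col_mx 0 u = 0 by rewrite mul_row_col mulmx0 add0r.
  move/(unit_colinj uZF)/eqP; rewrite -col_mx0 => /eqP/eq_col_mx [_ ->] //.
have rXs : \rank Xs = m.
  apply: colinj => v h.
  set A := X *m F in rA h.
  set w := invmx (A^T *m A) *m A^T *m (X *m Z *m v).
  have h1 : X *m (Z *m v - F *m w) = 0.
    move: h; rewrite /Xs /resid_proj mulmxBl mul1mx mulmxBl mulmxBl.
    rewrite mulmxBr /w /A !mulmxA => ->.
    by [].
  have h2 := colfree rX h1.
  have : row_mx Z F *m col_mx v (- w) = 0.
    by rewrite mul_row_col mulmxN.
  move/(unit_colinj uZF)/eqP; rewrite -col_mx0 => /eqP/eq_col_mx [-> _] //.
split => //; exact: gram_unit.
Qed.
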